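(* If $c=c_1+\cdots+c_m$ is an $XY$-slope decomposition, then $c_1,\dots,c_m$ are linearly independent.
   Context: $V$ is a finite dimensional real vector space with a positive definite symmetric bilinear form $\langle\cdot,\cdot\rangle$; $\|\cdot\|_X$ is a norm with dual norm $\|v\|_Y=\max\{\langle v,w\rangle:\|w\|_X=1\}$. For nonzero $v$, $\mu_{XY}(v)=\|v\|_Y/\|v\|_X$. An expression $c=c_1+\cdots+c_m$ is an $XY$-slope decomposition if all $c_i$ are nonzero, $\langle c_i,c_j\rangle=\|c_i\|_X\|c_j\|_Y$ for all $i\le j$, and $\mu_{XY}(c_1)>\cdots>\mu_{XY}(c_m)$. *)

(* Defs.v *)
(* The real vector space V is modelled as a finite-dimensional
   vector space (vectType) over an arbitrary real field R. *)
From HB Require Import structures.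
From mathcomp Require Import all_boot all_order all_algebra.
Set Implicit Arguments. Unset Strict Implicit. Unset Printing Implicit Defensive.
Import Order.TTheory GRing.Theory Num.Theory.
Local Open Scope ring_scope.

Section Defs.
Variables (R : realFieldType) (V : vectType R).

Definition inner_product (ip : V -> V -> R) : Prop :=
  [/\ forall (a : R) (u v w : V), ip (a *: u + v) w = a * ip u w + ip v w,
      forall u v : V, ip u v = ip v u
    & forall v : V, v != 0 -> 0 < ip v v].

Definition is_norm (nX : V -> R) : Prop :=
  [/\ forall v : V, v != 0 -> 0 < nX v,
      forall (a : R) (v : V), nX (a *: v) = `|a| * nX v
    & forall u v : V, nX (u + v) <= nX u + nX v].

Definition is_dual_norm (ip : V -> V -> R) (nX nY : V -> R) : Prop :=
  forall v : V,
    (exists2 w : V, nX w = 1 & ip v w = nY v) /\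
    (forall w : V, nX w = 1 -> ip v w <= nY v).

Definition slope (nX nY : V -> R) (v : V) : R := nY v / nX v.

Definition slope_decomposition (ip : V -> V -> R) (nX nY : V -> R)
    (c : V) (m : nat) (cs : 'I_m -> V) : Prop :=
  [/\ c = \sum_(i < m) cs i,
      forall i : 'I_m, cs i != 0,
      forall i j : 'I_m, (i <= j)%N -> ip (cs i) (cs j) = nX (cs i) * nY (cs j)
    & forall i j : 'I_m, (i < j)%N -> slope nX nY (cs j) < slope nX nY (cs i)].
End Defs.

(* Main.v *)
Require Import Defs.
From HB Require Import structures.
From mathcomp Require Import all_boot all_order all_algebra.
From mathcomp Require Import ring.
Import Order.TTheory GRing.Theory Num.Theory.
Local Open Scope ring_scope.

Section Aux.
Variables (R : realFieldType) (V : vectType R) (ip : V -> V -> R) (nX nY : V -> R).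
Hypothesis Hip : inner_product ip.
Hypothesis HX : is_norm nX.

Lemma ip_sum (I : Type) (r : seq I) (P : pred I) (F : I -> V) w :
  ip (\sum_(i <- r | P i) F i) w = \sum_(i <- r | P i) ip (F i) w.
Proof.
case: Hip => lin sym _.
have ip0 : ip 0 w = 0.
  have := lin 1 0 0 w; rewrite scale1r addr0 mul1r => h.
  by apply: (addrI (ip 0 w)); rewrite addr0 -h.
elim/big_rec2: _ => [|i y1 y2 _ <-]; first by [].
by rewrite -(scale1r (F i)) lin mul1r scale1r.
Qed.

Lemma ip_scale a u w : ip (a *: u) w = a * ip u w.
Proof.
case: Hip => lin _ _.
have ip0 : ip 0 w = 0.
  have := lin 1 0 0 w; rewrite scale1r addr0 mul1r => h.
  by apply: (addrI (ip 0 w)); rewrite addr0 -h.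
by have := lin a u 0 w; rewrite addr0 ip0 addr0.
Qed.

Lemma indep n (cs : 'I_n -> V) :
  (forall i, cs i != 0) ->
  (forall i j : 'I_n, (i <= j)%N -> ip (cs i) (cs j) = nX (cs i) * nY (cs j)) ->
  (forall i j : 'I_n, (i < j)%N -> slope nX nY (cs j) < slope nX nY (cs i)) ->
  forall k : 'I_n -> R, \sum_(i < n) k i *: cs i = 0 -> forall i, k i = 0.
Proof.
elim: n cs => [|n IH] cs Hnz Hip2 Hsl k Hk i; first by case: i.
case: HX => Xpos _ _.
have Hsym := (let: And3 _ s _ := Hip in s).
move: Hk; rewrite big_ord_recl => Hk.
have k0 : k ord0 = 0.
  case: n IH cs Hnz Hip2 Hsl k Hk i => [|n] IH cs Hnz Hip2 Hsl k Hk i.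
    move: Hk; rewrite big_ord0 addr0 => /eqP; rewrite scaler_eq0 (negbTE (Hnz _)) orbF.
    by move/eqP.
  pose c1 : 'I_n.+2 := lift ord0 ord0.
  pose L w := ip w (cs ord0) * nX (cs c1) - ip w (cs c1) * nX (cs ord0).
  have Llin : forall (r : seq 'I_n.+1) (F : 'I_n.+1 -> V),
      L (\sum_(i <- r) F i) = \sum_(i <- r) L (F i).
    by move=> r F; rewrite /L !ip_sum !mulr_suml -sumrB.
  have Lsc : forall a u, L (a *: u) = a * L u.
    by move=> a u; rewrite /L !ip_scale mulrBr !mulrA.
  have Lrest : forall j : 'I_n.+1, L (cs (lift ord0 j)) = 0.
    move=> j; rewrite /L Hsym (Hsym _ (cs c1)) !Hip2 //.
    by ring.
  have Ladd : forall a u v, L (a *: u + v) = a * L u + L v.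
    case: Hip => lin _ _ a u v; rewrite /L !lin; ring.
  have L0 : L 0 = 0 by have := Llin [::] (fun _ => 0); rewrite !big_nil.
  have := congr1 L Hk.
  rewrite Ladd L0 Llin big1 ?addr0; last first.
    move=> j _; rewrite -[_ *: _]addr0 Ladd Lrest L0; ring.
  move/eqP; rewrite mulf_eq0 => /orP[/eqP //|].
  have x0 : 0 < nX (cs ord0) by apply: Xpos.
  have x1 : 0 < nX (cs c1) by apply: Xpos.
  have := Hsl ord0 c1 isT; rewrite /slope.
  rewrite ltr_pdivrMr // mulrAC ltr_pdivlMr // => hlt.
  rewrite /L Hip2 // Hip2 // => /eqP h; exfalso.
  move: hlt; rewrite -subr_gt0.
  have -> : nY (cs ord0) * nX (cs c1) - nY (cs c1) * nX (cs ord0) = 0.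
    apply: (mulfI (lt0r_neq0 x0)). rewrite mulr0 -h; ring.
  by rewrite ltxx.
move: Hk; rewrite k0 scale0r add0r => Hk.
have Hrest : forall j : 'I_n, k (lift ord0 j) = 0.
  apply: (IH (fun j => cs (lift ord0 j))) => //.
  - by move=> a b hab; apply: Hip2; rewrite !lift0 ltnS.
  - by move=> a b hab; apply: Hsl; rewrite !lift0 ltnS.
by case: (unliftP ord0 i) => [j ->|->].
Qed.
End Aux.

Theorem mainTheorem13 (R : realFieldType) (V : vectType R)
    (ip : V -> V -> R) (nX nY : V -> R)
    (Hip : inner_product ip) (HX : is_norm nX) (HY : is_dual_norm ip nX nY)
    (c : V) (m : nat) (cs : 'I_m -> V) :
  slope_decomposition ip nX nY c cs ->
  free [seq cs i | i : 'I_m].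
Proof.
case=> _ Hnz Hip2 Hsl.
have -> : [seq cs i | i : 'I_m] = val [tuple cs i | i < m].
  by rewrite /mktuple /=.
change (free (tval [tuple cs i | i < m])).
apply/freeP => k Hk i.
apply: (@indep _ _ _ _ _ Hip HX _ _ Hnz Hip2 Hsl) => //.
apply: etrans Hk; apply: eq_bigr => j _; by rewrite -tnth_nth tnth_mktuple.
Qed.
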